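(* Let $R$ be a ring with unity and involution $*$, and let $a,b,c\in R$. The following statements are equivalent. (1) $a$ is left dual $(b,c)$-core invertible. (2) $b\in b(cab)^*R$. (3) $b\in Rcab\cap bb^*R$. (4) There exists some $x\in Rc$ such that $b(xab)^n=b$ and $((xab)^n)^*=(xab)^n$ for every positive integer $n$. (5) There exists some $x\in Rc$ such that $b(xab)^n=b$ and $((xab)^n)^*=(xab)^n$ for some positive integer $n$.
   Context: An element $a\in R$ is called left dual $(b,c)$-core invertible if there exists $x\in Rc$ such that $bxab=b$ and $(xab)^*=xab$; such an $x$ is called a left dual $(b,c)$-core inverse of $a$. *)

(* Defs.v *)
From mathcomp Require Import all_boot all_algebra.
Set Implicit Arguments. Unset Strict Implicit. Unset Printing Implicit Defensive.
Import GRing.Theory.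
Local Open Scope ring_scope.

Definition is_involution (R : nzRingType) (s : R -> R) : Prop :=
  [/\ forall x y : R, s (x + y) = s x + s y,
      forall x y : R, s (x * y) = s y * s x
    & forall x : R, s (s x) = x].

Definition left_dual_bc_core_inverse (R : nzRingType) (s : R -> R) (a b c x : R) : Prop :=
  (exists r : R, x = r * c) /\ b * x * a * b = b /\ s (x * a * b) = x * a * b.

Definition left_dual_bc_core_invertible (R : nzRingType) (s : R -> R) (a b c : R) : Prop :=
  exists x : R, left_dual_bc_core_inverse s a b c x.

(* Main.v *)
Require Import Defs.
From mathcomp Require Import all_boot all_algebra.
Import GRing.Theory.
Local Open Scope ring_scope.

Section H.
Variables (R : nzRingType) (s : R -> R) (hs : is_involution s) (a b c : R).

Let sM : forall x y, s (x * y) = s y * s x.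
Proof. by case: hs. Qed.
Let sK : forall x, s (s x) = x.
Proof. by case: hs. Qed.

Lemma L12 : left_dual_bc_core_invertible s a b c ->
  exists r : R, b = b * s (c * a * b) * r.
Proof.
case=> x [[r ->] [H1 H2]]; exists (s r).
rewrite !mulrA in H1; by rewrite -mulrA -sM !mulrA H2 !mulrA H1.
Qed.

Lemma L21 : (exists r : R, b = b * s (c * a * b) * r) ->
  left_dual_bc_core_invertible s a b c.
Proof.
case=> r Hb.
pose u := s (c * a * b) * r.
have Hbu : b = b * u by rewrite /u mulrA.
have Hsb : s b = s u * s b by rewrite {1}Hbu sM.
have Hu : u = s u * u.
  transitivity (s b * s (c * a) * r).
    by rewrite /u sM.
  rewrite {1}Hsb -!mulrA; congr (_ * _).
  by rewrite /u !sM !mulrA.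
have Hsu : s u = u by rewrite {1}Hu sM sK -Hu.
exists (s r * c); split; first by exists (s r).
have E : s r * c * a * b = u by rewrite -Hsu /u sM sK !mulrA.
have E' : b * (s r * c) * a * b = b * u by rewrite -E !mulrA.
by rewrite E' E Hsu -Hbu.
Qed.

Lemma L13 : left_dual_bc_core_invertible s a b c ->
  ((exists r : R, b = r * c * a * b) /\ (exists r : R, b = b * s b * r)).
Proof.
move=> H; have [r' Hr'] := L12 H.
case: H => x [[r ->] [H1 H2]]; split.
  by exists (b * r); rewrite !mulrA in H1 *.
exists (s (c * a) * r'); rewrite {1}Hr' sM !mulrA.
by [].
Qed.

Lemma L32 : ((exists r : R, b = r * c * a * b) /\ (exists r : R, b = b * s b * r)) ->
  exists r : R, b = b * s (c * a * b) * r.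
Proof.
case=> [[t Ht] [w Hw]]; exists (s t * w).
have Hsb : s b = s (c * a * b) * s t by rewrite {1}Ht -!mulrA sM !mulrA.
by rewrite {1}Hw Hsb !mulrA.
Qed.

Lemma L14 : left_dual_bc_core_invertible s a b c ->
  (exists x : R, (exists r : R, x = r * c) /\
         forall n : nat, (0 < n)%N ->
           b * (x * a * b) ^+ n = b /\ s ((x * a * b) ^+ n) = (x * a * b) ^+ n).
Proof.
case=> x [Hx [H1 H2]]; exists x; split => // n.
have He : x * a * b * (x * a * b) = x * a * b.
  have H1' : b * (x * a * b) = b by rewrite !mulrA.
  transitivity (x * a * (b * (x * a * b))); first by rewrite !mulrA.
  by rewrite H1'.
have Hn : forall m, (x * a * b) ^+ m.+1 = x * a * b.
  elim=> [|m IH]; first by rewrite expr1.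
  by rewrite exprS IH He.
case: n => // m _; rewrite Hn H2; split => //.
by rewrite !mulrA in H1 *.
Qed.

Lemma L45 : (exists x : R, (exists r : R, x = r * c) /\
         forall n : nat, (0 < n)%N ->
           b * (x * a * b) ^+ n = b /\ s ((x * a * b) ^+ n) = (x * a * b) ^+ n) ->
      (exists x : R, (exists r : R, x = r * c) /\
         exists n : nat, (0 < n)%N /\
           b * (x * a * b) ^+ n = b /\ s ((x * a * b) ^+ n) = (x * a * b) ^+ n).
Proof. by case=> x [Hx H]; exists x; split => //; exists 1%N; split => //; apply: H. Qed.

Lemma L51 : (exists x : R, (exists r : R, x = r * c) /\
         exists n : nat, (0 < n)%N /\
           b * (x * a * b) ^+ n = b /\ s ((x * a * b) ^+ n) = (x * a * b) ^+ n) ->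
  left_dual_bc_core_invertible s a b c.
Proof.
case=> x [[r Hr] [[|m] [// _ [H1 H2]]]].
have E : (x * a * b) ^+ m * x * a * b = (x * a * b) ^+ m.+1 by rewrite exprSr !mulrA.
exists ((x * a * b) ^+ m * x); split.
  by exists ((x * a * b) ^+ m * r); rewrite Hr mulrA.
have E' : b * ((x * a * b) ^+ m * x) * a * b = b * (x * a * b) ^+ m.+1 by rewrite -E !mulrA.
by rewrite E' E H1 H2.
Qed.
End H.

Theorem theorem2p4 (R : nzRingType) (s : R -> R) (hs : is_involution s) (a b c : R) :
  [<->
    (* (1) *) left_dual_bc_core_invertible s a b c;
    (* (2) b ∈ b (cab)^* R *) (exists r : R, b = b * s (c * a * b) * r);
    (* (3) b ∈ Rcab ∩ bb^*R *)
      ((exists r : R, b = r * c * a * b) /\ (exists r : R, b = b * s b * r));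
    (* (4) *)
      (exists x : R, (exists r : R, x = r * c) /\
         forall n : nat, (0 < n)%N ->
           b * (x * a * b) ^+ n = b /\ s ((x * a * b) ^+ n) = (x * a * b) ^+ n);
    (* (5) *)
      (exists x : R, (exists r : R, x = r * c) /\
         exists n : nat, (0 < n)%N /\
           b * (x * a * b) ^+ n = b /\ s ((x * a * b) ^+ n) = (x * a * b) ^+ n)
  ].
Proof.
tfae.
- exact: (@L12 _ _ hs).
- by move=> H; apply: (@L13 _ _ hs); apply: (@L21 _ _ hs).
- by move=> H; apply: (@L14 _ _); apply: (@L21 _ _ hs); apply: (@L32 _ _ hs).
- exact: L45.
- exact: (@L51 _ _).
Qed.
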